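(* Let $\ell\ge4$ be such that $T_\ell$ is long, let $t\in\mathring T_\ell$, and let $\tau\in\mathbb{C}$ with $|\tau-t|<1/\sqrt{B(t)}$. Then for every $s$ with $4<s<B^{1/6}(t)$, \[ \left|\sum_{k\ge0:\,|k-A(t)|>s\sqrt{B(t)}}a_k^2e^{k\tau}\right|\le2H(\mathrm{Re}\,\tau)\exp\left(-\tfrac18(s-4)^2\right). \]
   Context: Let $G(z)=\sum_{n\ge0}a_n^2z^n$ be an entire function with $a_n\ge0$, infinitely many non-zero. Put $H(t)=G(e^t)=\sum a_n^2e^{nt}$, $A(t)=H'(t)/H(t)$, $B(t)=A'(t)$, and assume $B$ is non-decreasing and unbounded on $\mathbb{R}$. Choose points $t_\ell\uparrow\infty$ with $B(t_\ell)=\ell^6$ (for all $\ell$ for which this is possible), and set $T_\ell=[t_\ell,t_{\ell+1}]$. $T_\ell$ is called long if $t_{\ell+1}-t_\ell\ge8/\ell^2$, and then its interior is $\mathring T_\ell=[t_\ell+2/\ell^2,\,t_{\ell+1}-2/\ell^2]$. *)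

(* Defs.v *)
From Stdlib Require Import Reals Lra.
From Coquelicot Require Export Coquelicot.
Open Scope R_scope.

(* H(t) = G(e^t) = sum_n a_n^2 e^{n t} *)
Definition Hf (a : nat -> R) (t : R) : R :=
  Series (fun n => (a n) ^ 2 * exp (INR n * t)).

Definition Af (a : nat -> R) (t : R) : R := Derive (Hf a) t / Hf a t.
Definition Bf (a : nat -> R) (t : R) : R := Derive (Af a) t.

Definition cexp (z : C) : C :=
  (exp (Re z) * cos (Im z), exp (Re z) * sin (Im z)).

Definition tail_term (a : nat -> R) (t s : R) (tau : C) (k : nat) : C :=
  if Rlt_dec (s * sqrt (Bf a t)) (Rabs (INR k - Af a t))
  then RtoC ((a k) ^ 2) * cexp (RtoC (INR k) * tau)
  else RtoC 0.

(* Main.v *)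
Require Import Defs.
From Stdlib Require Import Reals Lra.
From Coquelicot Require Import Coquelicot.
Open Scope R_scope.

Section An.
Variable a : nat -> R.
Hypothesis hG : CV_radius (fun n => (a n) ^ 2) = p_infty.
Hypothesis hpos : exists n, a n <> 0.

Let c := fun n => (a n) ^ 2.

Lemma exp_pow_INR (n : nat) (x : R) : exp (INR n * x) = exp x ^ n.
Proof.
  rewrite <- Rpower_pow by apply exp_pos. unfold Rpower. rewrite ln_exp. reflexivity.
Qed.

Lemma rad_lt (d : nat -> R) : CV_radius d = p_infty -> forall x, Rbar_lt (Rabs x) (CV_radius d).
Proof. intros H x. rewrite H. simpl. exact I. Qed.

Lemma Hf_eq x : Hf a x = PSeries c (exp x).
Proof.
  unfold Hf, PSeries. apply Series_ext. intro n. unfold c. rewrite exp_pow_INR. reflexivity.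
Qed.

Lemma H_series x : is_series (fun k => a k ^ 2 * exp (INR k * x)) (Hf a x).
Proof.
  unfold Hf. apply Series_correct.
  destruct (CV_radius_inside c (exp x) (rad_lt c hG _)) as [l Hl].
  exists l. eapply is_series_ext; [|exact Hl]. intro n. simpl.
  rewrite exp_pow_INR. unfold scal; simpl; unfold mult; simpl. unfold c.
  rewrite pow_n_pow. ring.
Qed.

Definition Hd x := exp x * PSeries (PS_derive c) (exp x).

Lemma H_derive x : is_derive (Hf a) x (Hd x).
Proof.
  apply is_derive_ext with (f := fun y => PSeries c (exp y)).
  { intro; rewrite Hf_eq; reflexivity. }
  unfold Hd.
  replace (exp x * PSeries (PS_derive c) (exp x)) with (scal (exp x) (PSeries (PS_derive c) (exp x))) by reflexivity.
  apply (is_derive_comp (PSeries c) exp).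
  - apply is_derive_PSeries. apply rad_lt; assumption.
  - apply is_derive_exp.
Qed.

Lemma H_pos x : 0 < Hf a x.
Proof.
  destruct hpos as [n Hn].
  set (f := fun k => a k ^ 2 * exp (INR k * x)).
  assert (Hf0 : forall k, 0 <= f k).
  { intro k. unfold f. apply Rmult_le_pos. apply pow2_ge_0. left; apply exp_pos. }
  assert (Hs : forall N, 0 <= sum_n f N).
  { induction N. rewrite sum_O. apply Hf0. rewrite sum_Sn. unfold plus; simpl. specialize (Hf0 (S N)). lra. }
  assert (Hle : sum_n f n <= Hf a x).
  { apply (is_lim_seq_incr_compare (sum_n f)). apply H_series.
    intro m. rewrite sum_Sn. unfold plus; simpl. specialize (Hf0 (S m)). lra. }
  assert (0 < f n).
  { unfold f. apply Rmult_lt_0_compat. assert (a n * a n > 0). { destruct (Rlt_or_le 0 (a n)); [nra|]. assert (a n < 0) by lra. nra. } simpl. lra. apply exp_pos. }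
  destruct n. rewrite sum_O in Hle. lra.
  rewrite sum_Sn in Hle. unfold plus in Hle; simpl in Hle. specialize (Hs n). lra.
Qed.

Lemma Derive_H x : Derive (Hf a) x = Hd x.
Proof. apply is_derive_unique, H_derive. Qed.

Lemma Af_eq x : Af a x = Hd x / PSeries c (exp x).
Proof. unfold Af. rewrite Derive_H, Hf_eq. reflexivity. Qed.

Lemma A_ex_derive x : ex_derive (Af a) x.
Proof.
  apply ex_derive_ext with (f := fun y => Hd y / PSeries c (exp y)).
  { intro; rewrite Af_eq; reflexivity. }
  apply ex_derive_div.
  - unfold Hd. apply ex_derive_mult.
    + eexists; apply is_derive_exp.
    + apply (ex_derive_comp (PSeries (PS_derive c)) exp).
      * eexists. apply is_derive_PSeries. apply rad_lt. rewrite CV_radius_derive. assumption.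
      * eexists; apply is_derive_exp.
  - apply (ex_derive_comp (PSeries c) exp).
    * eexists. apply is_derive_PSeries. apply rad_lt. assumption.
    * eexists; apply is_derive_exp.
  - rewrite <- Hf_eq. apply Rgt_not_eq, H_pos.
Qed.

Lemma A_derive x : is_derive (Af a) x (Bf a x).
Proof. apply Derive_correct, A_ex_derive. Qed.

Lemma lnH_derive x : is_derive (fun y => ln (Hf a y)) x (Af a x).
Proof.
  replace (Af a x) with (scal (Hd x) (/ Hf a x)).
  apply (is_derive_comp ln (Hf a)). apply is_derive_ln, H_pos. apply H_derive.
  unfold Af. rewrite Derive_H. reflexivity.
Qed.

Lemma cont_of_derive (f : R -> R) x l : is_derive f x l -> continuity_pt f x.
Proof.
  intro H. apply continuity_pt_filterlim. apply (ex_derive_continuous f). exists l; exact H.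
Qed.

Lemma A_lip x y M : (forall u, Rmin x y <= u <= Rmax x y -> 0 <= Bf a u <= M) ->
  Rabs (Af a y - Af a x) <= M * Rabs (y - x).
Proof.
  intro HB.
  destruct (MVT_gen (Af a) x y (Bf a)) as [e [He Heq]].
  { intros; apply A_derive. }
  { intros; eapply cont_of_derive; apply A_derive. }
  rewrite Heq, Rabs_mult. specialize (HB e He).
  rewrite (Rabs_right (Bf a e)) by lra. apply Rmult_le_compat_r. apply Rabs_pos. lra.
Qed.

Lemma taylor2 x y M : (forall u, Rmin x y <= u <= Rmax x y -> Bf a u <= M) ->
  ln (Hf a y) <= ln (Hf a x) + (y - x) * Af a x + M / 2 * (y - x) ^ 2.
Proof.
  intro HB.
  set (g := fun u => ln (Hf a u) - (u - x) * Af a x - M / 2 * (u - x) ^ 2).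
  set (dg := fun u => Af a u - Af a x - M * (u - x)).
  assert (Hd' : forall u, is_derive g u (dg u)).
  { intro u. unfold g, dg.
    assert (D2 : is_derive (fun u => (u - x) * Af a x) u (Af a x)) by (auto_derive; try split; try ring).
    assert (D3 : is_derive (fun u => M / 2 * (u - x) ^ 2) u (M * (u - x))).
    { auto_derive; [exact I | field]. }
    pose proof (is_derive_minus _ _ _ _ _ (is_derive_minus _ _ _ _ _ (lnH_derive u) D2) D3) as D.
    unfold minus, plus, opp in D; simpl in D.
    replace (Af a u - Af a x - M * (u - x)) with (Af a u + - Af a x + - (M * (u - x))) by ring.
    eapply is_derive_ext; [|exact D]. intro; simpl; ring. }
  destruct (MVT_gen g x y dg) as [e [He Heq]].
  { intros; apply Hd'. }
  { intros; eapply cont_of_derive; apply Hd'. }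
  destruct (MVT_gen (Af a) x e (Bf a)) as [f [Hf' Heqf]].
  { intros; apply A_derive. }
  { intros; eapply cont_of_derive; apply A_derive. }
  assert (Hfr : Rmin x y <= f <= Rmax x y).
  { revert Hf' He. unfold Rmin, Rmax. repeat destruct Rle_dec; lra. }
  specialize (HB f Hfr).
  assert (Hprod : 0 <= (e - x) * (y - x)).
  { revert He. unfold Rmin, Rmax. destruct Rle_dec; intros; nra. }
  assert (g y - g x <= 0).
  { rewrite Heq. unfold dg. rewrite Heqf. nra. }
  unfold g in H. replace (x - x) with 0 in H by ring. lra.
Qed.

Lemma taylor2_exp x y M : (forall u, Rmin x y <= u <= Rmax x y -> Bf a u <= M) ->
  Hf a y <= Hf a x * exp ((y - x) * Af a x + M / 2 * (y - x) ^ 2).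
Proof.
  intro HB. pose proof (taylor2 x y M HB).
  rewrite <- (exp_ln (Hf a y)) by apply H_pos.
  rewrite <- (exp_ln (Hf a x)) by apply H_pos.
  rewrite <- exp_plus. destruct (Rle_lt_or_eq_dec _ _ H) as [Hl|He]; [left; apply exp_increasing; lra | right; rewrite He; f_equal; ring].
Qed.

End An.

Lemma cexp_mod z : Cmod (cexp z) = exp (Re z).
Proof.
  unfold cexp, Cmod. cbn [fst snd].
  replace ((exp (Re z) * cos (Im z)) ^ 2 + (exp (Re z) * sin (Im z)) ^ 2) with (exp (Re z) ^ 2).
  rewrite sqrt_pow2; [reflexivity| left; apply exp_pos].
  pose proof (sin2_cos2 (Im z)). unfold Rsqr in H. nra.
Qed.

Lemma norm_series_le (f : nat -> C) (g : nat -> R) S0 T :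
  is_series f S0 -> is_series g T -> (forall n, Cmod (f n) <= g n) -> Cmod S0 <= T.
Proof.
  intros Hf Hg Hle.
  assert (Hp : forall N, norm (sum_n f N) <= sum_n g N).
  { induction N.
    - rewrite !sum_O. change (Cmod (f 0%nat) <= g 0%nat). apply Hle.
    - rewrite !sum_Sn. change (Cmod (Cplus (sum_n f N) (f (S N))) <= sum_n g N + g (S N)).
      eapply Rle_trans. apply Cmod_triangle.
      change (norm (sum_n f N)) with (Cmod (sum_n f N)) in IHN. specialize (Hle (S N)). lra. }
  assert (L1 : is_lim_seq (fun N => norm (sum_n f N)) (norm S0)).
  { unfold is_lim_seq. eapply filterlim_comp. exact Hf. apply filterlim_norm. }
  assert (Hg2 : is_lim_seq (sum_n g) T) by exact Hg.
  pose proof (is_lim_seq_le _ _ _ _ Hp L1 Hg2) as R. simpl in R. exact R.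
Qed.

Lemma exp_ge1 x : 0 <= x -> 1 <= exp x.
Proof. intro H. rewrite <- exp_0. destruct H. left; apply exp_increasing; auto. subst; lra. Qed.

Lemma tail_bound a (hG : CV_radius (fun n => (a n) ^ 2) = p_infty) t s tau lam :
  0 < lam ->
  exists S0, is_series (tail_term a t s tau) S0 /\
    Cmod S0 <= exp (- lam * (Af a t + s * sqrt (Bf a t))) * Hf a (Re tau + lam)
             + exp (lam * (Af a t - s * sqrt (Bf a t))) * Hf a (Re tau - lam).
Proof.
  intro hl.
  set (K := Af a t). set (r := s * sqrt (Bf a t)). set (sg := Re tau).
  set (u := fun k => a k ^ 2 * exp (INR k * sg) *
     (exp (lam * (INR k - K - r)) + exp (- lam * (INR k - K + r)))).
  assert (Hu : is_series u (exp (- lam * (K + r)) * Hf a (sg + lam) + exp (lam * (K - r)) * Hf a (sg - lam))).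
  { pose proof (is_series_plus _ _ _ _
      (is_series_scal (exp (- lam * (K + r))) _ _ (H_series a hG (sg + lam)))
      (is_series_scal (exp (lam * (K - r))) _ _ (H_series a hG (sg - lam)))) as P.
    eapply is_series_ext; [|exact P]. intro n. unfold plus, scal; simpl. unfold mult; simpl.
    unfold u.
    assert (E1 : exp (- lam * (K + r)) * exp (INR n * (sg + lam)) = exp (INR n * sg) * exp (lam * (INR n - K - r))).
    { rewrite <- !exp_plus. f_equal. ring. }
    assert (E2 : exp (lam * (K - r)) * exp (INR n * (sg - lam)) = exp (INR n * sg) * exp (- lam * (INR n - K + r))).
    { rewrite <- !exp_plus. f_equal. ring. }
    transitivity (a n ^ 2 * (exp (- lam * (K + r)) * exp (INR n * (sg + lam))) + a n ^ 2 * (exp (lam * (K - r)) * exp (INR n * (sg - lam)))).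
    ring. rewrite E1, E2. ring. }
  assert (Hle : forall k, Cmod (tail_term a t s tau k) <= u k).
  { intro k. unfold tail_term. fold K r.
    assert (Hc : 0 <= a k ^ 2) by apply pow2_ge_0.
    pose proof (exp_pos (INR k * sg)). pose proof (exp_pos (lam * (INR k - K - r))).
    pose proof (exp_pos (- lam * (INR k - K + r))).
    destruct (Rlt_dec r (Rabs (INR k - K))) as [Hr|Hr].
    - rewrite Cmod_mult, Cmod_R, cexp_mod.
      replace (Re (RtoC (INR k) * tau)) with (INR k * sg) by (unfold sg; destruct tau; simpl; ring).
      rewrite Rabs_right by lra.
      assert (1 <= exp (lam * (INR k - K - r)) + exp (- lam * (INR k - K + r))).
      { destruct (Rle_or_lt 0 (INR k - K)).
        - rewrite Rabs_right in Hr by lra. pose proof (exp_ge1 (lam * (INR k - K - r))). 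
          assert (0 <= lam * (INR k - K - r)) by nra. lra.
        - rewrite Rabs_left in Hr by lra. pose proof (exp_ge1 (- lam * (INR k - K + r))).
          assert (0 <= - lam * (INR k - K + r)) by nra. lra. }
      assert (HP : 0 <= a k ^ 2 * exp (INR k * sg)) by (apply Rmult_le_pos; lra).
      unfold u. set (P := a k ^ 2 * exp (INR k * sg)) in *. set (E := exp (lam * (INR k - K - r)) + exp (- lam * (INR k - K + r))) in *. nra.
    - change (RtoC 0) with (RtoC 0). rewrite Cmod_R, Rabs_R0. unfold u.
      apply Rmult_le_pos; [apply Rmult_le_pos|]; lra. }
  assert (Hex : ex_series (tail_term a t s tau)).
  { apply (ex_series_le (K := C_AbsRing) (V := C_CompleteNormedModule) _ u). exact Hle. eexists; exact Hu. }
  destruct Hex as [S0 HS0]. exists S0. split; auto.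
  eapply norm_series_le; eauto.
Qed.

Lemma pow_lt_strict u v n : 0 <= u < v -> u ^ S n < v ^ S n.
Proof.
  intros [H1 H2]. induction n. simpl; lra.
  change (u * u ^ S n < v * v ^ S n).
  assert (0 <= u ^ S n) by (apply pow_le; lra). nra.
Qed.

Lemma expo_bound lam q s D As K :
  0 < q -> lam * q = (s - 4) / 4 -> 4 < s -> 0 < lam ->
  Rabs (As - K) <= 4 * q ^ 2 * D -> q * D <= 1 -> 0 <= D ->
  - lam * (K + s * q) + (lam * As + 4 * q ^ 2 / 2 * lam ^ 2) <= - (1 / 8) * (s - 4) ^ 2 /\
  lam * (K - s * q) + (- lam * As + 4 * q ^ 2 / 2 * lam ^ 2) <= - (1 / 8) * (s - 4) ^ 2.
Proof.
  intros Hq Hl Hs Hlam HA HD HD0.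
  assert (E1 : lam * (As - K) <= s - 4).
  { assert (lam * (As - K) <= lam * (4 * q ^ 2 * D)).
    { apply Rmult_le_compat_l. lra. eapply Rle_trans; [apply Rle_abs|exact HA]. }
    assert (lam * (4 * q ^ 2 * D) = 4 * (lam * q) * (q * D)) by ring.
    nra. }
  assert (E2 : lam * (K - As) <= s - 4).
  { assert (lam * (K - As) <= lam * (4 * q ^ 2 * D)).
    { apply Rmult_le_compat_l. lra. eapply Rle_trans; [|exact HA]. rewrite Rabs_minus_sym. apply Rle_abs. }
    assert (lam * (4 * q ^ 2 * D) = 4 * (lam * q) * (q * D)) by ring.
    nra. }
  assert (E3 : 4 * q ^ 2 / 2 * lam ^ 2 = 2 * (lam * q) ^ 2) by field.
  assert (E4 : lam * (s * q) = s * (lam * q)) by ring.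
  rewrite Hl in E3, E4. split; nra.
Qed.

Theorem lemma3p6 (a : nat -> R)
  (ha_nonneg : forall n, 0 <= a n)
  (ha_inf : forall N : nat, exists n : nat, (N <= n)%nat /\ a n <> 0)
  (hG_entire : CV_radius (fun n => (a n) ^ 2) = p_infty)
  (hB_mono : forall x y : R, x <= y -> Bf a x <= Bf a y)
  (hB_unbdd : ~ (exists M : R, forall x : R, Rabs (Bf a x) <= M))
  (l : nat) (hl : (4 <= l)%nat)
  (tl tl1 : R)
  (htl : Bf a tl = INR l ^ 6)
  (htl1 : Bf a tl1 = INR (S l) ^ 6)
  (hlong : tl1 - tl >= 8 / INR l ^ 2)
  (t : R)
  (ht : tl + 2 / INR l ^ 2 <= t <= tl1 - 2 / INR l ^ 2)
  (tau : C)
  (htau : Cmod (tau - RtoC t) < 1 / sqrt (Bf a t))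
  (s : R)
  (hs : 4 < s < Rpower (Bf a t) (1 / 6)) :
  exists S : C,
    is_series (tail_term a t s tau) S /\
    Cmod S <= 2 * Hf a (Re tau) * exp (- (1 / 8) * (s - 4) ^ 2).
Proof.
  assert (hpos : exists n, a n <> 0) by (destruct (ha_inf 0%nat) as [n [_ Hn]]; eauto).
  set (x := INR l) in *.
  assert (Hx : 4 <= x) by (unfold x; replace 4 with (INR 4) by (simpl; lra); apply le_INR; exact hl).
  rewrite S_INR in htl1. fold x in htl1.
  set (b := Bf a t) in *.
  assert (Hx2 : 0 < x ^ 2) by (apply pow_lt; lra).
  assert (H2x : 0 < 2 / x ^ 2) by (apply Rdiv_lt_0_compat; lra).
  assert (Htl : tl <= t) by lra. assert (Htl1 : t <= tl1) by lra.
  assert (hb1 : x ^ 6 <= b) by (rewrite <- htl; apply hB_mono; exact Htl).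
  assert (hb2 : b <= (x + 1) ^ 6) by (rewrite <- htl1; apply hB_mono; exact Htl1).
  assert (Hx6 : 0 < x ^ 6) by (apply pow_lt; lra).
  assert (hb0 : 0 < b) by lra.
  set (rho := Rpower b (1 / 6)) in *.
  assert (Hrho : 0 < rho) by (unfold rho, Rpower; apply exp_pos).
  assert (Hrho6 : rho ^ 6 = b).
  { rewrite <- (Rpower_pow 6 rho Hrho). unfold rho. rewrite Rpower_mult.
    replace (1 / 6 * INR 6) with 1 by (simpl; field). apply Rpower_1; exact hb0. }
  set (q := sqrt b) in *.
  assert (Hq : q = rho ^ 3).
  { unfold q. rewrite <- Hrho6. replace (rho ^ 6) with ((rho ^ 3) ^ 2) by ring.
    apply sqrt_pow2. apply pow_le; lra. }
  assert (Hxr : x <= rho).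
  { destruct (Rle_or_lt x rho) as [H|H]; auto.
    pose proof (pow_lt_strict rho x 5 (conj (Rlt_le _ _ Hrho) H)). lra. }
  assert (Hx3 : x ^ 3 <= rho ^ 3) by (apply pow_incr; lra).
  assert (Hq0 : 0 < q) by (rewrite Hq; apply pow_lt; lra).
  set (d := 1 / (4 * x ^ 2)).
  assert (Hd : d * (4 * x ^ 2) = 1) by (unfold d; field; lra).
  assert (Hd0 : 0 < d) by (unfold d; apply Rdiv_lt_0_compat; lra).
  set (M := 4 * b).
  assert (HM : forall u, t - 2 * d <= u <= t + 2 * d -> 0 <= Bf a u <= M).
  { intros u Hu.
    assert (E : 2 * d = 1 / (2 * x ^ 2)) by (unfold d; field; lra).
    assert (tl <= u <= tl1).
    { assert (1 / (2 * x ^ 2) <= 2 / x ^ 2) by (unfold Rdiv; apply Rmult_le_compat_r; [ | ]; 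
         [left; apply Rinv_0_lt_compat; lra | lra]) || (apply Rmult_le_reg_r with (2 * x ^ 2); [lra|]; field_simplify; lra).
      lra. }
    split.
    - rewrite <- (hB_mono tl u ltac:(lra)) at 1. lra. 
    - eapply Rle_trans. apply hB_mono; apply H. rewrite htl1.
      assert ((x + 1) ^ 6 <= (5 / 4 * x) ^ 6) by (apply pow_incr; lra).
      replace ((5 / 4 * x) ^ 6) with (15625 / 4096 * x ^ 6) in H0 by field.
      unfold M. lra. }
  assert (Hqb : q ^ 2 = b) by (rewrite Hq, <- Hrho6; ring).
  set (sg := Re tau).
  assert (Hsig : Rabs (sg - t) < 1 / q).
  { eapply Rle_lt_trans; [|exact htau].
    replace (sg - t) with (Re (tau - RtoC t)) by (unfold sg; destruct tau; simpl; ring).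
    apply re_le_Cmod. }
  assert (Hqd : 1 / q <= d).
  { assert (4 * x ^ 2 <= q) by (rewrite Hq; nra).
    assert (d * q >= 1) by nra.
    assert (1 / q * q = 1) by (field; lra).
    destruct (Rle_or_lt (1 / q) d); auto. nra. }
  set (lam := (s - 4) / (4 * q)).
  assert (Hlq : lam * q = (s - 4) / 4) by (unfold lam; field; lra).
  assert (Hlam : 0 < lam) by (unfold lam; apply Rdiv_lt_0_compat; lra).
  assert (Hld : lam <= d).
  { assert (d * (4 * q) >= rho).
    { rewrite Hq. assert (x ^ 2 <= rho ^ 2) by (apply pow_incr; lra).
      assert (x ^ 2 * rho <= rho ^ 2 * rho) by (apply Rmult_le_compat_r; lra).
      assert (d * (4 * x ^ 2 * rho) <= d * (4 * (rho ^ 2 * rho))) by (apply Rmult_le_compat_l; lra).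
      replace (d * (4 * x ^ 2 * rho)) with (d * (4 * x ^ 2) * rho) in H1 by ring.
      rewrite Hd in H1. replace (rho ^ 3) with (rho ^ 2 * rho) by ring. lra. }
    destruct (Rle_or_lt lam d); auto.
    assert (lam * (4 * q) > d * (4 * q)) by (apply Rmult_lt_compat_r; lra).
    replace (lam * (4 * q)) with (4 * (lam * q)) in H1 by ring. rewrite Hlq in H1. lra. }
  assert (Hdist : Rabs (sg - t) + lam <= 2 * d) by lra.
  destruct (tail_bound a hG_entire t s tau lam Hlam) as [S0 [HS HC]].
  exists S0. split; auto.
  change (sqrt (Bf a t)) with q in HC. fold b q sg in HC.
  set (K := Af a t) in *. set (As := Af a sg).
  assert (T1 : Hf a (sg + lam) <= Hf a sg * exp ((sg + lam - sg) * As + M / 2 * (sg + lam - sg) ^ 2)).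
  { apply taylor2_exp; auto. intros u Hu. apply HM.
    revert Hu Hdist. unfold Rmin, Rmax. destruct Rle_dec; intros; [|lra].
    split; (assert (Rabs (sg - t) >= sg - t) by (apply Rle_ge, Rle_abs));
    (assert (Rabs (sg - t) >= -(sg - t)) by (rewrite <- Rabs_Ropp; apply Rle_ge, Rle_abs)); lra. }
  assert (T2 : Hf a (sg - lam) <= Hf a sg * exp ((sg - lam - sg) * As + M / 2 * (sg - lam - sg) ^ 2)).
  { apply taylor2_exp; auto. intros u Hu. apply HM.
    revert Hu Hdist. unfold Rmin, Rmax. destruct Rle_dec; intros; [lra|].
    split; (assert (Rabs (sg - t) >= sg - t) by (apply Rle_ge, Rle_abs));
    (assert (Rabs (sg - t) >= -(sg - t)) by (rewrite <- Rabs_Ropp; apply Rle_ge, Rle_abs)); lra. }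
  replace (sg + lam - sg) with lam in T1 by ring.
  replace (sg - lam - sg) with (- lam) in T2 by ring.
  assert (HL : Rabs (As - K) <= M * Rabs (sg - t)).
  { apply A_lip; auto. intros u Hu. apply HM.
    revert Hu Hdist. unfold Rmin, Rmax. destruct Rle_dec; intros;
    (assert (Rabs (sg - t) >= sg - t) by (apply Rle_ge, Rle_abs));
    (assert (Rabs (sg - t) >= -(sg - t)) by (rewrite <- Rabs_Ropp; apply Rle_ge, Rle_abs)); lra. }
  unfold M in HL. rewrite <- Hqb in HL.
  assert (HqD : q * Rabs (sg - t) <= 1).
  { assert (1 / q * q = 1) by (field; lra). pose proof (Rabs_pos (sg - t)). nra. }
  destruct (expo_bound lam q s (Rabs (sg - t)) As K Hq0 Hlq (proj1 hs) Hlam HL HqD (Rabs_pos _)) as [X1 X2].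
  unfold M in T1, T2. rewrite <- Hqb in T1, T2.
  set (E := exp (- (1 / 8) * (s - 4) ^ 2)).
  assert (Hmono : forall y z, y <= z -> exp y <= exp z).
  { intros y z [Hyz|Hyz]; [left; apply exp_increasing; auto | subst; lra]. }
  pose proof (H_pos a hG_entire hpos sg) as HHs.
  assert (B1 : exp (- lam * (K + s * q)) * Hf a (sg + lam) <= Hf a sg * E).
  { eapply Rle_trans. apply Rmult_le_compat_l. left; apply exp_pos. exact T1.
    replace (exp (- lam * (K + s * q)) * (Hf a sg * exp (lam * As + 4 * q ^ 2 / 2 * lam ^ 2)))
      with (Hf a sg * exp (- lam * (K + s * q) + (lam * As + 4 * q ^ 2 / 2 * lam ^ 2))) by (rewrite exp_plus; ring).
    apply Rmult_le_compat_l. lra. apply Hmono. exact X1. }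
  assert (B2 : exp (lam * (K - s * q)) * Hf a (sg - lam) <= Hf a sg * E).
  { replace ((- lam) ^ 2) with (lam ^ 2) in T2 by ring.
    eapply Rle_trans. apply Rmult_le_compat_l. left; apply exp_pos. exact T2.
    replace (exp (lam * (K - s * q)) * (Hf a sg * exp (- lam * As + 4 * q ^ 2 / 2 * lam ^ 2)))
      with (Hf a sg * exp (lam * (K - s * q) + (- lam * As + 4 * q ^ 2 / 2 * lam ^ 2))) by (rewrite exp_plus; ring).
    apply Rmult_le_compat_l. lra. apply Hmono. exact X2. }
  lra.
Qed.
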